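(* (1) For every fixed integer $d\ge 3$ there is a constant $C_d$ such that $m^*(n,d)\le C_d(\log_2 n)^{\lfloor\log_2 d\rfloor}$ for all integers $n\ge 2$; that is, $m^*(n,d)=O\big(\log_2^{\lfloor \log_2 d\rfloor} n\big)$. (2) For every integer $n\ge 3$, $m^*(n,3)\le 2\lceil\log_2 n\rceil-1$.
   Context: For a binary matrix $M$ and a nonempty set $S$ of its columns, $S$ is a stopping set if the submatrix formed by $S$ has no row with exactly one $1$; $s(M)$ is the minimum size of a stopping set ($+\infty$ if none). $M$ is $d$-decodable if $s(M)\ge d+1$. $m^*(n,d)$ is the minimum $m$ such that an $m\times n$ $d$-decodable binary matrix exists. *)

(* Defs.v *)
From Stdlib Require Import Reals.
From mathcomp Require Import all_boot all_algebra.

Set Implicit Arguments.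
Unset Strict Implicit.
Unset Printing Implicit Defensive.

Definition stopping_set (m n : nat) (M : 'M[bool]_(m, n)) (S : {set 'I_n}) : bool :=
  (S != set0) && [forall i : 'I_m, #|[set j in S | M i j]| != 1%N].

(* M is d-decodable: s(M) >= d+1, i.e. every stopping set has size >= d+1
   (vacuous when there is no stopping set, s(M) = +oo). *)
Definition decodable (d m n : nat) (M : 'M[bool]_(m, n)) : bool :=
  [forall S : {set 'I_n}, stopping_set M S ==> (d < #|S|)%N].

Definition has_decodable (n d : nat) : pred nat :=
  fun m => [exists M : 'M[bool]_(m, n), decodable d M].

Lemma has_decodable_ex (n d : nat) : exists m, has_decodable n d m.
Proof.
exists n; apply/existsP; exists (\matrix_(i < n, j < n) (i == j))%R.
apply/forallP => S; apply/implyP => /andP [/set0Pn [j jS] /forallP /(_ j)].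
suff -> : [set j0 in S | (\matrix_(i < n, j1 < n) (i == j1))%R j j0] = [set j].
  by rewrite cards1.
apply/setP => k; rewrite !inE mxE eq_sym.
by case: eqP => [->|]; rewrite ?jS ?andbF.
Qed.

Definition mstar (n d : nat) : nat := ex_minn (has_decodable_ex n d).

Definition log2R (x : R) : R := Rdiv (ln x) (ln (INR 2)).

(* Main.v *)
Set Warnings "-all".
Require Import Defs.
From Stdlib Require Import Reals Lra.
From mathcomp Require Import all_boot all_algebra.
From mathcomp Require Import zify.
Set Implicit Arguments. Unset Strict Implicit. Unset Printing Implicit Defensive.

Lemma cards_split (T : finType) (S : {set T}) (P : pred T) :
  #|[set z in S | P z]| + #|[set z in S | ~~ P z]| = #|S|.
Proof.
rewrite -(cardsID [set z | P z] S); congr (_ + _); apply: eq_card => z;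
by rewrite !inE; case: (P z); rewrite ?andbT ?andbF.
Qed.

Lemma other (T : finType) (A : {set T}) x : #|A| != 1 -> x \in A ->
  exists2 y, y \in A & y != x.
Proof.
move=> H xA; move: H; rewrite (cardsD1 x A) xA add1n eqSS -lt0n card_gt0.
by case/set0Pn => y; rewrite !inE => /andP [yx yA]; exists y.
Qed.

Lemma mstar_le n d m : has_decodable n d m -> mstar n d <= m.
Proof. by rewrite /mstar => H; case: ex_minnP => m0 _ /(_ m H). Qed.

Lemma enc_ex n L : n <= 2 ^ L -> exists enc : 'I_n -> {ffun 'I_L -> bool}, injective enc.
Proof.
move=> H; have H' : n <= #|{ffun 'I_L -> bool}| by rewrite card_ffun card_bool card_ord.
exists (fun j => enum_val (widen_ord H' j)) => a b /enum_val_inj /(congr1 val) /= E.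
exact: val_inj.
Qed.

Section Core.
Variables (n L : nat) (enc : 'I_n -> {ffun 'I_L -> bool}).
Hypothesis enc_inj : injective enc.

Definition matchs (cs : seq ('I_L * bool)) (v : 'I_n) := all (fun p => enc v p.1 == p.2) cs.

Definition good j (S : {set 'I_n}) := forall cs, size cs <= j -> #|[set x in S | matchs cs x]| != 1.

Lemma core j S : S != set0 -> good j S -> 2 ^ j.+1 <= #|S|.
Proof.
elim: j S => [|j IH] S S0 G.
  have := G [::] (leqnn 0).
  have -> : [set x in S | matchs [::] x] = S by apply/setP=> x; rewrite !inE andbT.
  move: S0; rewrite -card_gt0 expn1; lia.
have G0 := G [::] (leq0n _).
rewrite (_ : [set x in S | matchs [::] x] = S) in G0; last first.
  by apply/setP=> x; rewrite !inE andbT.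
have /set0Pn [x xS] := S0.
have [y yS yx] := other G0 xS.
have [b Hb] : exists b, enc y b != enc x b.
  case: (boolP [exists b, enc y b != enc x b]) => [/existsP [b Hb] | /existsPn H].
    by exists b.
  suff : enc y = enc x by move/enc_inj => E; rewrite E eqxx in yx.
  by apply/ffunP => b; apply/eqP; exact: negbNE (H b).
have Gb : forall beta, good j [set z in S | enc z b == beta].
  move=> beta cs Hcs; have := G ((b, beta) :: cs) Hcs.
  suff -> : [set x0 in [set z in S | enc z b == beta] | matchs cs x0] = [set x0 in S | matchs ((b, beta) :: cs) x0] by [].
  by apply/setP => z; rewrite !inE /matchs /= andbA.
have Cb : forall beta z, z \in S -> enc z b = beta -> 2 ^ j.+1 <= #|[set z in S | enc z b == beta]|.
  move=> beta z zS Ez; apply: IH (Gb beta); apply/set0Pn; exists z; by rewrite !inE zS Ez eqxx.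
have E := cards_split S (fun z => enc z b).
have E1 : [set z in S | enc z b] = [set z in S | enc z b == true].
  by apply/setP => z; rewrite !inE eqb_id.
have E2 : [set z in S | ~~ enc z b] = [set z in S | enc z b == false].
  by apply/setP => z; rewrite !inE eqbF_neg.
rewrite E1 E2 in E; rewrite -E expnS.
have C1 := Cb true; have C2 := Cb false.
move: Hb; case Ey : (enc y b); case Ex : (enc x b) => // _.
  have := C1 y yS Ey; have := C2 x xS Ex; lia.
have := C1 x xS Ex; have := C2 y yS Ey; lia.
Qed.

Variable k : nat.
Definition Row := {ffun 'I_k -> option ('I_L * bool)}.
Definition rmatch (r : Row) (v : 'I_n) :=
  [forall i, if r i is Some p then enc v p.1 == p.2 else true].
Definition row_of (cs : seq ('I_L * bool)) : Row := [ffun i : 'I_k => nth None (map Some cs) i].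

Lemma row_ofP cs v : size cs <= k -> rmatch (row_of cs) v = matchs cs v.
Proof.
move=> hs; apply/forallP/allP.
  move=> H p pin; have hi : index p cs < k by apply: leq_trans hs; rewrite index_mem.
  have := H (Ordinal hi); rewrite ffunE /= (nth_map p) ?index_mem // nth_index //.
move=> H i; rewrite ffunE.
case: (ltnP i (size cs)) => hi; last by rewrite nth_default ?size_map.
case E : (nth None _ i) => [p|] //; apply: H.
by rewrite -(mem_map (@Some_inj _)) -E mem_nth // size_map.
Qed.

Definition Mat : 'M[bool]_(#|{: Row}|, n) := \matrix_(i, j) rmatch (enum_val i) j.

Lemma Mat_dec d : d < 2 ^ k.+1 -> decodable d Mat.
Proof.
move=> hd; apply/forallP => S; apply/implyP => /andP [S0 /forallP H].
suff : 2 ^ k.+1 <= #|S| by lia.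
apply: core S0 _ => cs hcs; have := H (enum_rank (row_of cs)).
suff -> : [set j in S | Mat (enum_rank (row_of cs)) j] = [set x in S | matchs cs x] by [].
by apply/setP => j; rewrite !inE mxE enum_rankK row_ofP.
Qed.

Lemma card_Row : #|{: Row}| = (L * 2).+1 ^ k.
Proof. by rewrite card_ffun card_option card_prod card_bool !card_ord. Qed.
End Core.

Lemma part1_nat d n k L : d < 2 ^ k.+1 -> n <= 2 ^ L -> mstar n d <= (L * 2).+1 ^ k.
Proof.
move=> hd hn; have [enc encI] := enc_ex hn.
rewrite -(card_Row L k); apply: mstar_le; apply/existsP; exists (Mat enc k).
exact: Mat_dec.
Qed.
Section Part2.
Variables (n L : nat) (enc : 'I_n -> {ffun 'I_L.+2 -> bool}).
Hypothesis enc_inj : injective enc.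

Definition M2 : 'M[bool]_((2 * L).+3, n) :=
  \matrix_(i, j) if i < L.+2 then enc j (inord i) else ~~ enc j (inord (i - L.+2)).

Lemma r1P (b : 'I_L.+2) : (b : nat) < (2 * L).+3.
Proof. have := ltn_ord b; lia. Qed.
Lemma r0P (b : 'I_L.+2) : (b : nat) < L.+1 -> L.+2 + b < (2 * L).+3.
Proof. lia. Qed.

Lemma M2_r1 (b : 'I_L.+2) j : M2 (Ordinal (r1P b)) j = enc j b.
Proof. by rewrite mxE /= ltn_ord inord_val. Qed.

Lemma M2_r0 (b : 'I_L.+2) (hb : (b : nat) < L.+1) j : M2 (Ordinal (r0P hb)) j = ~~ enc j b.
Proof.
rewrite mxE /= ifF; last by apply/negbTE; rewrite -leqNgt leq_addr.
by rewrite addKn inord_val.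
Qed.

Lemma M2_dec : decodable 3 M2.
Proof.
apply/forallP => S; apply/implyP => /andP [S0 /forallP H].
rewrite ltnNge; apply/negP => S3.
have const : forall b : 'I_L.+2, (b : nat) < L.+1 -> forall z w, z \in S -> w \in S -> enc z b = enc w b.
  move=> b hb z w zS wS; apply/eqP; apply: contraT => Hne.
  have A1 : 2 <= #|[set j in S | enc j b]|.
    have H1 := H (Ordinal (r1P b)).
    have E : [set j in S | M2 (Ordinal (r1P b)) j] = [set j in S | enc j b].
      by apply/setP => j; rewrite !inE M2_r1.
    rewrite E in H1.
    have [u uS Eu] : exists2 u, u \in S & enc u b.
      by move: Hne; case Ez: (enc z b); case Ew: (enc w b) => //; [exists z|exists w].
    have uA : u \in [set j in S | enc j b] by rewrite inE uS Eu.
    have [v vA vu] := other H1 uA.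
    rewrite (cardsD1 u) uA; have : #|[set j in S | enc j b] :\ u| > 0.
      by rewrite card_gt0; apply/set0Pn; exists v; rewrite in_setD1 vu vA.
    lia.
  have A0 : 2 <= #|[set j in S | ~~ enc j b]|.
    have H1 := H (Ordinal (r0P hb)).
    have E : [set j in S | M2 (Ordinal (r0P hb)) j] = [set j in S | ~~ enc j b].
      by apply/setP => j; rewrite !inE M2_r0.
    rewrite E in H1.
    have [u uS Eu] : exists2 u, u \in S & ~~ enc u b.
      by move: Hne; case Ez: (enc z b); case Ew: (enc w b) => // _; [exists w => //; rewrite Ew|exists z => //; rewrite Ez].
    have uA : u \in [set j in S | ~~ enc j b] by rewrite inE uS Eu.
    have [v vA vu] := other H1 uA.
    rewrite (cardsD1 u) uA; have : #|[set j in S | ~~ enc j b] :\ u| > 0.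
      by rewrite card_gt0; apply/set0Pn; exists v; rewrite in_setD1 vu vA.
    lia.
  have := cards_split S (fun j => enc j b); lia.
have uniq2 : forall z w, z \in S -> w \in S -> enc z ord_max = enc w ord_max -> z = w.
  move=> z w zS wS Em; apply: enc_inj; apply/ffunP => b.
  case: (ltnP b L.+1) => hb; first exact: const.
  have -> : b = ord_max by apply/val_inj/eqP; rewrite /= eqn_leq -ltnS ltn_ord hb.
  exact: Em.
have allF : forall w, w \in S -> enc w ord_max = false.
  move=> w wS; apply/negbTE/negP => Ew.
  have H1 := H (Ordinal (r1P ord_max)).
  have wA : w \in [set j in S | M2 (Ordinal (r1P ord_max)) j] by rewrite inE wS M2_r1 Ew.
  have [z] := other H1 wA; rewrite inE M2_r1 => /andP [zS Ez] zw.
  by rewrite (uniq2 z w zS wS (etrans (idP Ez) (esym (idP Ew)))) eqxx in zw.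
have /set0Pn [x xS] := S0.
have [y yS yx] : exists2 y, y \in S & y != x.
  have h0 : ((@ord0 L.+1) : nat) < L.+1 by [].
  case Ex : (enc x ord0).
    have H1 := H (Ordinal (r1P ord0)).
    have xA : x \in [set j in S | M2 (Ordinal (r1P ord0)) j] by rewrite inE xS M2_r1 Ex.
    have [z] := other H1 xA; rewrite inE => /andP [zS _] zx; by exists z.
  have H1 := H (Ordinal (r0P h0)).
  have xA : x \in [set j in S | M2 (Ordinal (r0P h0)) j] by rewrite inE xS M2_r0 Ex.
  have [z] := other H1 xA; rewrite inE => /andP [zS _] zx; by exists z.
by rewrite (uniq2 y x yS xS (etrans (allF y yS) (esym (allF x xS)))) eqxx in yx.
Qed.
End Part2.

Lemma part2_nat n L : n <= 2 ^ L.+2 -> mstar n 3 <= 2 * L.+2 - 1.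
Proof.
move=> hn; have [enc encI] := enc_ex hn.
have -> : 2 * L.+2 - 1 = (2 * L).+3 by lia.
apply: mstar_le; apply/existsP; exists (M2 enc); exact: M2_dec.
Qed.
Section Aux.
Local Open Scope R_scope.
Lemma aux (t : nat) : 1 <= INR t -> INR (muln t.+1 2).+1 <= 5 * INR t.
Proof. move=> h; rewrite S_INR mult_INR S_INR /=; lra. Qed.
End Aux.

Lemma log2_ge t n : 2 ^ t <= n -> Rle (INR t) (log2R (INR n)).
Proof.
move=> h.
have hn : (0 < n) by apply: leq_trans h; rewrite expn_gt0.
have h2 : Rlt 1 (INR 2) by simpl; lra.
have l2 : Rlt 0 (ln (INR 2)) by rewrite -ln_1; apply: ln_increasing; lra.
have hp : Rlt 0 (INR (2 ^ t)) by apply: lt_0_INR; apply/ltP; rewrite expn_gt0.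
have hle : Rle (INR (2 ^ t)) (INR n) by apply: le_INR; apply/leP.
have : Rle (ln (INR (2 ^ t))) (ln (INR n)).
  by case: (Rle_lt_or_eq_dec _ _ hle) => [hlt|->]; [left; apply: ln_increasing | right].
rewrite (_ : INR (2 ^ t) = pow (INR 2) t); last first.
  by rewrite -pow_INR; congr INR; elim: t {h hp hle} => // t IH; rewrite expnS /= IH.
rewrite ln_pow; last lra.
move=> H; rewrite /log2R /Rdiv.
apply: (Rmult_le_reg_r (ln (INR 2))) => //.
rewrite Rmult_assoc Rinv_l; last lra.
by rewrite Rmult_1_r.
Qed.

Theorem theorem5p2 :
  (forall d : nat, (3 <= d)%N ->
     exists C : R, forall n : nat, (2 <= n)%N ->
       Rle (INR (mstar n d)) (Rmult C (pow (log2R (INR n)) (trunc_log 2 d))))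
  /\
  (forall n : nat, (3 <= n)%N -> (mstar n 3 <= 2 * up_log 2 n - 1)%N).
Proof.
split.
  move=> d hd; set k := trunc_log 2 d; exists (pow 5 k) => n hn.
  set t := trunc_log 2 n.
  have hdk : d < 2 ^ k.+1 by apply: trunc_log_ltn.
  have hnt : n <= 2 ^ t.+1 by apply: ltnW; apply: trunc_log_ltn.
  have ht : 1 <= t.
    by apply: trunc_log_max => //; rewrite expn1.
  have hm := part1_nat hdk hnt.
  have hl := log2_ge (trunc_logP (isT : 1 < 2) (ltnW hn)).
  fold t in hl.
  have ht' : Rle 1 (INR t) by apply: (le_INR 1); apply/leP.
  apply: Rle_trans (_ : Rle _ (INR ((t.+1 * 2).+1 ^ k))) _.
    by apply: le_INR; apply/leP.
  have -> : INR (expn (t.+1 * 2).+1 k) = pow (INR (t.+1 * 2).+1) k.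
    by rewrite -pow_INR; congr INR; elim: (k) => // k0 IH; rewrite expnS /= IH.
  rewrite -Rpow_mult_distr.
  apply: pow_incr; split; first exact: pos_INR.
  apply: Rle_trans (aux ht') _.
  apply: Rmult_le_compat_l => //; lra.
move=> n hn; set L := up_log 2 n.
have hL : n <= 2 ^ L by apply: up_logP.
have L2 : 2 <= L.
  rewrite leqNgt; apply/negP => hL1; move: hL; rewrite -(subnKC (ltnW hL1)).
  have : L <= 1 by lia.
  case: L hL1 => [|[|]] //= _ _; lia.
move: hL; rewrite -(subnKC L2) => hL.
have := part2_nat (L := L - 2) hL.
by rewrite -(subnKC L2).
Qed.
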